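(* Let $d\in\mathbb{N}$, let $P$ be a stationary and ergodic probability measure on $\Omega=[0,1]^{\mathcal{K}^d}$, and fix an integer $0\le q<d$. For each $t\in[0,1]$ let $\widehat\beta_q(t)$ be the non-random constant such that $|\Lambda_n|^{-1}\beta_q^n(t)\to\widehat\beta_q(t)$ almost surely. Assume that for every $Q\in\mathcal{K}^d$ the function $t\mapsto P(\omega_Q\le t)$ is continuous on $[0,1]$. Let $L_q^n=\int_0^1\beta_q^n(t)\,dt$. Then $$\lim_{n\to\infty}\frac{1}{|\Lambda_n|}L_q^n=\int_0^1\widehat\beta_q(t)\,dt\quad\text{almost surely.}$$
   Context: An elementary interval is $[l,l+1]$ or $[l]=[l,l]$ with $l\in\mathbb{Z}$; an elementary cube in $\mathbb{R}^d$ is a product of $d$ elementary intervals, of dimension equal to the number of nondegenerate factors; $\mathcal{K}^d$ is the set of all elementary cubes. A cubical set is a union of elementary cubes. For a cubical set $X$, $C_k(X)$ is the free $\mathbb{Z}$-module on the $k$-dimensional elementary cubes contained in $X$ with the standard cubical boundary operator; $H_k(X)$ is the resulting homology and, for bounded $X$, $\beta_k(X)$ is the rank of the free part of $H_k(X)$. $\Omega=[0,1]^{\mathcal{K}^d}$ with product topology and Borel $\sigma$-field; $\tau_x\omega=(\omega_{-x+Q})_Q$ for $x\in\mathbb{Z}^d$; stationarity: $P\circ\tau_x^{-1}=P$ for all $x$; ergodicity: translation-invariant events have probability $0$ or $1$. $X(t)=\bigcup\{Q:\omega_Q\le t\}$, $\Lambda_n=[-n,n]^d$, $X^n(t)=X(t)\cap\Lambda_n$,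 $\beta_q^n(t)=\beta_q(X^n(t))$, $|\Lambda_n|=(2n)^d$. *)

(* Defs.v *)
From HB Require Import structures.
From mathcomp Require Import all_boot all_order all_algebra.
From mathcomp Require Import all_classical all_reals all_analysis.
Set Implicit Arguments. Unset Strict Implicit. Unset Printing Implicit Defensive.
Import Order.TTheory GRing.Theory Num.Theory numFieldNormedType.Exports.
Local Open Scope classical_set_scope.
Local Open Scope ring_scope.

(* An elementary cube is a product of d elementary intervals; the i-th factor
   (l, b) stands for [l, l+1] if b = true and for [l] = [l, l] if b = false. *)
Definition cube (d : nat) := {ffun 'I_d -> int * bool}.

Definition cube_set (R : realType) (d : nat) (Q : cube d) : set ('I_d -> R) :=
  [set x | forall i : 'I_d,
     ((Q i).1)%:~R <= x i <= ((Q i).1 + ((Q i).2 : nat)%:Z)%:~R].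

Definition cdim (d : nat) (Q : cube d) : nat := #|[pred i : 'I_d | (Q i).2]|.

Definition shift (d : nat) (x : 'I_d -> int) (Q : cube d) : cube d :=
  [ffun i => ((Q i).1 + x i, (Q i).2)].

(* the two faces of Q obtained by degenerating its (nondegenerate) i-th factor
   [l, l+1] into [l + e], e = 0 or 1 *)
Definition face (d : nat) (Q : cube d) (i : 'I_d) (e : int) : cube d :=
  [ffun j => if j == i then ((Q i).1 + e, false) else Q j].

Definition csign (d : nat) (Q : cube d) (i : 'I_d) : int :=
  (-1) ^+ #|[pred j : 'I_d | (j < i)%N && (Q j).2]|.

(* incidence number [Q : P] of the standard cubical boundary operator:
   d Q = sum_{i nondegenerate} csign Q i * (face Q i 1 - face Q i 0) *)
Definition inc (d : nat) (Q P : cube d) : int :=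
  \sum_(i : 'I_d | (Q i).2)
     csign Q i * ((P == face Q i 1)%:Z - (P == face Q i 0)%:Z).

(* the cubes Q having P as a facet, i.e. the only Q with inc Q P possibly
   nonzero: P with a degenerate factor [l] replaced by [l,l+1] or [l-1,l] *)
Definition coface_up (d : nat) (P : cube d) (i : 'I_d) : cube d :=
  [ffun j => if j == i then ((P i).1, true) else P j].
Definition coface_down (d : nat) (P : cube d) (i : 'I_d) : cube d :=
  [ffun j => if j == i then ((P i).1 - 1, true) else P j].
Definition cofaces (d : nat) (P : cube d) : seq (cube d) :=
  [seq coface_up P i | i <- enum 'I_d & ~~ (P i).2] ++
  [seq coface_down P i | i <- enum 'I_d & ~~ (P i).2].

Definition chain (d : nat) := cube d -> int.

(* c is an element of C_k(X): supported on k-dimensional elementary cubes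
   contained in X (for bounded X the support is automatically finite) *)
Definition is_chain (R : realType) (d : nat) (X : set ('I_d -> R)) (k : nat)
  (c : chain d) : Prop :=
  forall Q, c Q != 0 -> @cube_set R d Q `<=` X /\ cdim Q = k.

(* boundary operator: (bd c)(P) = sum_Q c(Q) [Q : P]; the sum is over the
   cofaces of P since [Q : P] = 0 for all other Q *)
Definition bd (d : nat) (c : chain d) : chain d :=
  fun P => \sum_(Q <- cofaces P) c Q * inc Q P.

Definition is_cycle (R : realType) (d : nat) (X : set ('I_d -> R)) (k : nat)
  (z : chain d) : Prop :=
  is_chain X k z /\ forall P, bd z P = 0.

Definition is_boundary (R : realType) (d : nat) (X : set ('I_d -> R)) (k : nat)
  (b : chain d) : Prop :=
  exists e : chain d, is_chain X k.+1 e /\ forall P, b P = bd e P.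

(* there are r k-cycles whose classes in H_k(X) are Z-linearly independent *)
Definition indep_homology (R : realType) (d : nat) (X : set ('I_d -> R))
  (k r : nat) : Prop :=
  exists z : 'I_r -> chain d,
    (forall i, is_cycle X k (z i)) /\
    forall a : 'I_r -> int,
      is_boundary X k (fun P => \sum_(i < r) a i * z i P) -> forall i, a i = 0.

(* beta_k(X) = rank of the free part of H_k(X) = maximal number of Z-linearly
   independent elements of H_k(X) (finite for bounded X); as a real number *)
Definition betti (R : realType) (d : nat) (X : set ('I_d -> R)) (k : nat) : R :=
  sup [set (r%:R : R) | r in [set r : nat | indep_homology X k r]].

Definition Omega0 (R : realType) (d : nat) := cube d -> {i01 R}.
HB.instance Definition _ (R : realType) (d : nat) := Choice.on (Omega0 R d).
HB.instance Definition _ (R : realType) (d : nat) :=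
  isPointed.Build (Omega0 R d) (fun _ => (0:R)%:i01).

(* product sigma-field: generated by the coordinate maps w |-> w_Q
   (= Borel sigma-field of the product topology, the product being countable) *)
Definition coord_sets (R : realType) (d : nat) : set (set (Omega0 R d)) :=
  [set A | exists (Q : cube d) (B : set R),
     measurable B /\ A = [set w : Omega0 R d | B (w Q)%:num]].

Definition Omega (R : realType) (d : nat) := g_sigma_algebraType (@coord_sets R d).

Definition tau (R : realType) (d : nat) (x : 'I_d -> int) (w : Omega R d)
  : Omega R d := fun Q => w (shift (fun i => - x i) Q).

Definition stationary (R : realType) (d : nat) (P : probability (Omega R d) R)
  : Prop :=
  forall (x : 'I_d -> int) (A : set (Omega R d)),
    measurable A -> P (tau x @^-1` A) = P A.

Definition ergodic (R : realType) (d : nat) (P : probability (Omega R d) R)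
  : Prop :=
  forall A : set (Omega R d), measurable A ->
    (forall x : 'I_d -> int, tau x @^-1` A = A) -> P A = 0%E \/ P A = 1%E.

Definition Xt (R : realType) (d : nat) (w : Omega R d) (t : R)
  : set ('I_d -> R) :=
  \bigcup_(Q in [set Q : cube d | (w Q)%:num <= t]) @cube_set R d Q.

Definition Lambda (R : realType) (d : nat) (n : nat) : set ('I_d -> R) :=
  [set x | forall i, - (n%:R) <= x i <= n%:R].

Definition vol (R : realType) (d n : nat) : R := ((2 * n) ^ d)%:R.

Definition betti_n (R : realType) (d : nat) (q n : nat) (t : R) (w : Omega R d)
  : R := betti (Xt w t `&` @Lambda R d n) q.

Definition Lqn (R : realType) (d : nat) (q n : nat) (w : Omega R d) : \bar R :=
  (\int[lebesgue_measure]_(t in `[0%R, 1%R]) (betti_n q n t w)%:E)%E.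

(* Main.v *)
Set Warnings "-all".
Require Import Defs.
From HB Require Import structures.
From mathcomp Require Import all_boot all_order all_algebra.
From mathcomp Require Import all_classical all_reals all_analysis.
From mathcomp Require Import zify ring lra.
From mathcomp Require Import measurable_realfun.
Import Order.TTheory GRing.Theory Num.Theory numFieldNormedType.Exports.
Local Open Scope classical_set_scope.
Local Open Scope ring_scope.
Set Implicit Arguments. Unset Strict Implicit.

Definition Tn (d n : nat) := {ffun 'I_d -> 'I_(n.*2.+2) * bool}.

Definition emb {d n : nat} (j : Tn d n) : cube d :=
  [ffun i => (((j i).1 : nat)%:Z - (n.+1)%:Z, (j i).2)].

Lemma intrR (R : realType) (n : nat) : ((n%:Z)%:~R : R) = n%:R.
Proof. by []. Qed.

Lemma emb_surj (R : realType) (d n : nat) (Q : cube d) (x : 'I_d -> R) :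
  cube_set Q x -> Lambda n x -> exists j : Tn d n, Q = emb j.
Proof.
move=> hQ hL.
have key i : (0 <= (Q i).1 + n.+1%:Z)%R /\ ((Q i).1 + n.+1%:Z < n.*2.+2%:Z)%R.
  have /andP[h1 h2] := hQ i; have /andP[h3 h4] := hL i.
  have a : ((Q i).1%:~R <= (n%:Z)%:~R :> R) by rewrite intrR; exact: le_trans h1 h4.
  have b : ((- (n%:Z))%:~R <= ((Q i).1 + ((Q i).2 : nat)%:Z)%:~R :> R).
    rewrite intrN intrR; apply: le_trans h2; exact: h3.
  rewrite ler_int in a; rewrite ler_int in b.
  have : (((Q i).2 : nat) <= 1)%N by case: (Q i).2.
  lia.
exists [ffun i => (inord (absz ((Q i).1 + n.+1%:Z)), (Q i).2)].
apply/ffunP => i; rewrite !ffunE /=.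
have [k1 k2] := key i.
rewrite inordK; last by lia.
case: (Q i) k1 k2 => l b /= k1 k2; congr pair; lia.
Qed.
Lemma int_dep (T : finType) (r : nat) (z : 'I_r -> T -> int) :
  (#|T| < r)%N -> exists a : 'I_r -> int,
    (exists i, a i != 0) /\ forall j, \sum_(i < r) a i * z i j = 0.
Proof.
move=> hr.
pose A : 'M[rat]_(r, #|T|) := \matrix_(i, k) (z i (enum_val k))%:~R.
have : kermx A != 0.
  rewrite kermx_eq0 /row_free; apply/negP => /eqP h.
  by move: (rank_leq_col A); rewrite h; lia.
move=> /negP hK.
have [i0 hi0] : exists i0, row i0 (kermx A) != 0.
  case: (pickP (fun i0 => row i0 (kermx A) != 0)) => [i0 h|h]; first by exists i0.
  exfalso; apply: hK; apply/eqP/row_matrixP => i; rewrite row0.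
  by move: (h i) => /negbFE/eqP.
set v := row i0 (kermx A) in hi0.
have vA : v *m A = 0 by rewrite /v -row_mul mulmx_ker row0.
pose D : int := \prod_(i < r) denq (v 0 i).
pose a i : int := numq (v 0 i) * \prod_(i' < r | i' != i) denq (v 0 i').
have aE i : (a i)%:~R = v 0 i * D%:~R.
  rewrite /a /D [in RHS](bigD1 i) //= !intrM !rmorph_prod mulrA; congr (_ * _).
  set x := v 0 i.
  by rewrite -[X in X * _](divq_num_den x) divfK // intr_eq0 denq_neq0.
have D0 : (D%:~R : rat) != 0.
  by rewrite intr_eq0 /D; apply/prodf_neq0 => i _; exact: denq_neq0.
exists a; split.
  have [i hi] : exists i, v 0 i != 0.
    case: (pickP (fun i => v 0 i != 0)) => [i h|h]; first by exists i.
    exfalso; move/negP: hi0; apply; apply/eqP/rowP => i.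
    by move: (h i) => /negbFE/eqP ->; rewrite mxE.
  exists i. rewrite -(intr_eq0 rat) aE mulf_neq0 //.
move=> j; apply/eqP; rewrite -(intr_eq0 rat) rmorph_sum /=.
move/matrixP: vA => /(_ 0 (enum_rank j)); rewrite !mxE => h.
rewrite (eq_bigr (fun i => v 0 i * A i (enum_rank j) * D%:~R)).
  by rewrite -mulr_suml h mul0r.
move=> i _; rewrite intrM aE /A !mxE enum_rankK; ring.
Qed.

Lemma cube_set_ne (R : realType) d (Q : cube d) :
  cube_set Q (fun i => ((Q i).1)%:~R : R).
Proof.
move=> i; rewrite lexx /= ler_int lerDl; lia.
Qed.

Lemma indep_bound (R : realType) d n (X : set ('I_d -> R)) k r :
  X `<=` Lambda n -> indep_homology X k r -> (r <= #|Tn d n|)%N.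
Proof.
move=> hX [z [hz hind]]; rewrite leqNgt; apply/negP => hr.
have [a [[i hi] ha]] := @int_dep (Tn d n) r (fun i j => z i (emb j)) hr.
move/eqP: hi; apply; apply: (hind a) => //.
exists (fun _ => 0); split.
  by move=> Q; rewrite eqxx.
move=> P0; rewrite /bd [RHS]big1 => [|Q _]; last by rewrite mul0r.
case: (pselect (exists j : Tn d n, P0 = emb j)) => [[j ->]|hn]; first exact: ha j.
apply: big1 => i0 _.
suff -> : z i0 P0 = 0 by rewrite mulr0.
apply/eqP; apply/negP => /negP hne.
have [hsub _] := (hz i0).1 P0 hne.
apply: hn; apply: (@emb_surj R d n P0 (fun i => ((P0 i).1)%:~R : R)).
  exact: cube_set_ne.
exact/hX/hsub/cube_set_ne.
Qed.

Lemma betti_bound (R : realType) d n (X : set ('I_d -> R)) k :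
  X `<=` Lambda n -> 0 <= betti X k <= #|Tn d n|%:R.
Proof.
move=> hX; rewrite /betti.
set S := [set (r%:R : R) | r in [set r | indep_homology X k r]].
have S0 : S 0.
  exists 0%N => //; exists (fun i : 'I_0 => fun _ => 0); split; first by case.
  by move=> a _ [].
have ub : ubound S #|Tn d n|%:R.
  by move=> _ [r hr <-]; rewrite ler_nat; exact: indep_bound hX hr.
apply/andP; split.
  apply: (sup_upper_bound _ S0); split; first by exists 0.
  by exists #|Tn d n|%:R.
exact: ge_sup (ex_intro _ 0 S0) ub.
Qed.

Definition Phi {R : realType} {d : nat} (n : nat) (p : Omega R d * R)
  : {ffun Tn d n -> bool} := [ffun j => ((p.1 (emb j))%:num <= p.2)].

Definition Ucub {R : realType} {d n : nat} (v : {ffun Tn d n -> bool})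
  : set ('I_d -> R) := \bigcup_(j in [set j | v j]) cube_set (emb j).

Lemma betti_fact (R : realType) d q n t (w : Omega R d) :
  betti_n q n t w = betti (Ucub (Phi n (w, t)) `&` Lambda n) q.
Proof.
rewrite /betti_n; congr betti; apply/seteqP; split => x [hX hL]; split => //.
  case: hX => Q hQ hx; have [j hj] := @emb_surj R d n Q x hx hL.
  exists j; last by rewrite -hj.
  by rewrite /= /Phi ffunE /= -hj.
case: hX => j hj hx; exists (emb j) => //.
by move: hj; rewrite /= /Phi ffunE.

Qed.

Lemma coord_meas (R : realType) d (Q : cube d) :
  measurable_fun setT (fun w : Omega R d => (w Q)%:num).
Proof.
move=> _ B mB; rewrite setTI; apply: sub_sigma_algebra.
by exists Q, B; split.
Qed.

Lemma A_meas (R : realType) d (Q : cube d) :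
  measurable [set p : Omega R d * R | (p.1 Q)%:num <= p.2].
Proof.
have mf : measurable_fun setT (fun p : Omega R d * R => (p.1 Q)%:num - p.2).
  apply: measurable_realfun.measurable_funB; last exact: measurable_snd.
  exact: measurableT_comp (coord_meas Q) measurable_fst.
have := mf measurableT `]-oo, 0]%classic (measurable_itv _).
rewrite setTI; congr measurable; apply/seteqP; split => p /=;
  by rewrite in_itv /= subr_le0.
Qed.

Lemma fiber_meas (R : realType) d n (v : {ffun Tn d n -> bool}) :
  measurable [set p : Omega R d * R | Phi n p = v].
Proof.
pose A (j : Tn d n) := [set p : Omega R d * R | (p.1 (emb j))%:num <= p.2].
rewrite (_ : [set p | Phi n p = v] =
   \bigcap_(j in [set: Tn d n]) (if v j then A j else ~` A j)).
  apply: fin_bigcap_measurable; first exact: finite_finset.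
  by move=> j _; case: (v j); [exact: A_meas | apply: measurableC; exact: A_meas].
apply/seteqP; split => p /=.
  move=> <- j _; rewrite ffunE; case: ifPn => h //=.
  exact/negP.
move=> h; apply/ffunP => j; rewrite ffunE; have := h j I.
by case: (v j) => /=; [move=> -> | move/negP/negbTE].
Qed.

Lemma betti_meas (R : realType) d q n :
  measurable_fun setT (fun p : Omega R d * R => betti_n q n p.2 p.1).
Proof.
move=> _ B mB; rewrite setTI.
rewrite (_ : _ @^-1` B = \bigcup_(v in [set v : {ffun Tn d n -> bool} |
    B (betti (Ucub v `&` Lambda n) q)]) [set p | Phi n p = v]).
  apply: fin_bigcup_measurable; first exact: finite_finset.
  by move=> v _; exact: fiber_meas.
apply/seteqP; split => -[w t] /=.
  by move=> hB; exists (Phi n (w, t)) => //=; rewrite -betti_fact.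
by case=> v hv /= hp; rewrite betti_fact hp.
Qed.

Lemma card_Tn d n : #|Tn d n| = ((n.*2.+2 * 2) ^ d)%N.
Proof. by rewrite /Tn card_ffun card_prod card_ord card_bool card_ord. Qed.

Lemma ff_bound (R : realType) d q n t (w : Omega R d) :
  0 <= (vol R d n)^-1 * betti_n q n t w <= (4 ^ d)%:R.
Proof.
have /andP[b0 b1] : 0 <= betti_n q n t w <= #|Tn d n|%:R.
  by apply: betti_bound; exact: subIsetr.
have v0 : 0 <= (vol R d n) by rewrite /vol ler0n.
apply/andP; split; first by rewrite mulr_ge0 // invr_ge0.
case: n b0 b1 v0 => [|n] b0 b1 v0.
  have hv : forall e, (((2 * 0) ^ e)%:R : R)^-1 <= 1.
    by case=> [|e]; rewrite ?expn0 ?muln0 ?exp0n // ?invr1 ?invr0.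
  rewrite -[X in _ <= X]mul1r; apply: ler_pM => //.
    by rewrite invr_ge0.
  exact: hv.
  by rewrite (le_trans b1) // card_Tn.
have vp : 0 < vol R d n.+1 by rewrite /vol ltr0n expn_gt0.
rewrite mulrC ler_pdivrMr // (le_trans b1) // card_Tn /vol -natrM ler_nat.
rewrite -expnMn; move: (d) => e; elim: e => // e IH; rewrite !expnS.
by apply: leq_mul => //; lia.
Qed.

Lemma cvgR_E (R : realType) (u : nat -> R) l :
  u n @[n --> \oo] --> l -> ((u n)%:E) @[n --> \oo] --> l%:E.
Proof. by move=> h; apply: cvg_EFin; [exact: nearW | exact: h]. Qed.

Lemma cvg_eps (R : realType) (u : nat -> R) l :
  u n @[n --> \oo] --> l <->
  forall k : nat, exists N : nat, forall m, `|u (N + m)%N - l| <= k.+1%:R^-1.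
Proof.
split.
  move/cvgrPdist_le => h k.
  have [N _ hN] : \forall n \near \oo, `|l - u n| <= k.+1%:R^-1.
    by apply: h; rewrite invr_gt0 ltr0n.
  by exists N => m; rewrite distrC; apply: hN; rewrite /= leq_addr.
move=> h; apply/cvgrPdist_le => e e0.
have [k _ hk] := near_infty_natSinv_lt (PosNum e0).
have [N hN] := h k.
exists N => // n /= hn; rewrite distrC -(subnKC hn).
exact: le_trans (hN _) (ltW (hk k (leqnn k))).
Qed.

Unset Implicit Arguments.
Set Strict Implicit.

Theorem corollary2p10 (R : realType) (d : nat) (P : probability (Omega R d) R)
  (q : nat) (betahat : R -> R) :
  stationary P -> ergodic P -> (q < d)%N ->
  (forall t : R, t \in `[0, 1] ->
     {ae P, forall w : Omega R d, ((vol R d n)^-1 * betti_n q n t w)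
                        @[n --> \oo] --> betahat t}) ->
  (forall Q : cube d,
     {within `[0, 1], continuous
        (fun t : R => fine (P [set w : Omega R d | (w Q)%:num <= t]))}) ->
  {ae P, forall w : Omega R d, (fun n : nat => ((vol R d n)^-1)%:E * Lqn q n w)%E
     @ \oo --> (\int[lebesgue_measure]_(t in `[0%R, 1%R]) (betahat t)%:E)%E}.
Proof.
move=> _ _ _ Hconv _.
pose f n (p : Omega R d * R) : R := (vol R d n)^-1 * betti_n q n p.2 p.1.
have f_meas n : measurable_fun setT (f n).
  apply: measurable_realfun.measurable_funM; first exact: measurable_cst.
  exact: betti_meas.
have f0 n p : 0 <= f n p by have /andP[] := ff_bound q n p.2 p.1.
have f1 n p : f n p <= (4 ^ d)%:R by have /andP[] := ff_bound q n p.2 p.1.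
set M : R := (4 ^ d)%:R.
have M0 : 0 <= M by rewrite ler0n.
set D01 : set R := `[0%R, 1%R]%classic.
have mD : measurable D01 by exact: measurable_itv.
have mbeta : measurable_fun D01 (EFin \o betahat).
  apply: (@emeasurable_fun_cvg _ _ _ D01 (fun n t => (\int[P]_w (f n (w, t))%:E)%E) (EFin \o betahat)).
    move=> n; apply: (measurable_funS measurableT) => //.
    apply: (measurable_fun_fubini_tonelli_G (m1:=P) (EFin \o f n)).
      exact/measurable_EFinP.
    by move=> p; rewrite lee_fin.
  move=> t Dt.
  have hD := @dominated_convergence _ _ _ P setT measurableT
    (fun n w => (f n (w, t))%:E) (fun=> (betahat t)%:E) (fun=> M%:E).
  case: hD.
  - move=> n; apply/measurable_EFinP; exact: measurable_fun_pair1 (f_meas n).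
  - exact: measurable_cst.
  - apply: filterS (Hconv t Dt) => w hw _; exact: cvgR_E hw.
  - exact: finite_measure_integrable_cst.
  - apply: aeW => w n _; rewrite lee_fin ger0_norm //.
  have e : (P : {measure set Omega R d -> \bar R}) setT = 1%E := probability_setT P.
  by move=> _ _; rewrite integral_cst // e mule1.
pose bh := betahat \_ D01.
have mbh : measurable_fun setT bh.
  by apply/(measurable_restrictT _ mD); apply/measurable_EFinP.
pose g n (p : Omega R d * R) := f n p - bh p.2.
have mg n : measurable_fun setT (g n).
  apply: measurable_realfun.measurable_funB => //.
  exact: measurableT_comp mbh measurable_snd.
pose C := \bigcap_k \bigcup_N \bigcap_m
  [set p : Omega R d * R | `|g (N + m)%N p| <= k.+1%:R^-1].
have mC : measurable C.
  apply: bigcapT_measurable => k; apply: bigcupT_measurable => N.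
  apply: bigcapT_measurable => m.
  have := measurableT_comp (@normr_measurable R setT) (mg (N + m)%N)
    measurableT (measurable_itv `]-oo, k.+1%:R^-1]).
  rewrite setTI; congr measurable; apply/seteqP; split => p /=;
    by rewrite in_itv.
pose E := [set p : Omega R d * R |
  D01 p.2 /\ ~ (f n p @[n --> \oo] --> betahat p.2)].
have EE : E = (setT `*` D01) `&` ~` C.
  apply/seteqP; split => -[w t] /=.
    move=> [Dt hn]; split => //; move=> hC; apply: hn.
    apply/cvg_eps => k; have [N _ hN] := hC k I; exists N => m.
    by have := hN m I; rewrite /= /g /bh patchE mem_set.
  move=> [[_ Dt] hC]; split => // hc; apply: hC => k _.
  have [N hN] := (cvg_eps _ _).1 hc k; exists N => // m _.
  by rewrite /= /g /bh patchE mem_set.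
have mE : measurable E.
  rewrite EE; apply: measurableI; last exact: measurableC.
  exact: measurableX.
have G0 t : P (ysection E t) = 0%E.
  case: (pselect (D01 t)) => Dt.
    have [N [mN PN sN]] := Hconv t Dt.
    apply: (subset_measure0 (measurable_ysection t mE) mN _ PN).
    move=> w; rewrite /ysection /= inE => -[_ hn]; exact: sN.
  suff -> : ysection E t = set0 by rewrite measure0.
  apply/seteqP; split => // w; rewrite /ysection /= inE => -[ht _]; exact: Dt ht.
have hF := indic_fubini_tonelli P (@lebesgue_measure R) mE.
rewrite indic_fubini_tonelli_FE // indic_fubini_tonelli_GE // in hF.
rewrite [X in _ = X]integral0_eq /= in hF; last by move=> t _; exact: G0.
have mxs : measurable_fun setT ((@lebesgue_measure R) \o xsection E).
  exact: measurable_fun_xsection.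
have hae : ae_eq P setT ((@lebesgue_measure R) \o xsection E) (cst 0%E).
  apply/(ae_eq_integral_abs P measurableT mxs).
  rewrite -hF; apply: eq_integral => w _; apply: gee0_abs.
  rewrite /=; exact: measure_ge0.
apply: filterS hae => w /(_ I) /= hw0.
have mfw n : measurable_fun D01 (fun t => (f n (w, t))%:E).
  apply: (measurable_funS measurableT) => //; apply/measurable_EFinP.
  exact: measurable_fun_pair2 (f_meas n).
have hD := @dominated_convergence _ _ _ (@lebesgue_measure R) D01 mD
  (fun n t => (f n (w, t))%:E) (EFin \o betahat) (fun=> M%:E) mfw mbeta.
case: hD.
- exists (xsection E w); split => //; first exact: measurable_xsection.
  move=> t /= /not_implyP [Dt hn]; rewrite /xsection /= inE; split => //.
  by move=> hc; apply: hn; exact: cvgR_E hc.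
- apply/integrableP; split; first exact: measurable_cst.
  rewrite (eq_integral (cst M%:E)); last first.
    by move=> t _ /=; rewrite ger0_norm.
  have L : (@lebesgue_measure R) `[0%R, 1%R]%classic = 1%E.
    by rewrite lebesgue_measure_itv /= lte_fin ltr01 sube0.
  rewrite integral_cst // (_ : _ D01 = 1%E) ?mule1 ?ltry //; exact: L.

- apply: aeW => t n _; rewrite lee_fin ger0_norm //.
move=> _ _ hcvg.
have bge0 n t : 0 <= betti_n q n t w.
  by have /andP[] := betti_bound q (@subIsetr _ (Xt w t) (Lambda n)).
have -> : (fun n => ((vol R d n)^-1)%:E * Lqn q n w)%E =
    (fun n => \int[lebesgue_measure]_(t in D01) (f n (w, t))%:E)%E.
  apply/funext => n; rewrite /Lqn -ge0_integralZl //.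
  - apply: (measurable_funS measurableT) => //; apply/measurable_EFinP.
    exact: measurable_fun_pair2 (betti_meas q n).
  - by move=> t _; rewrite lee_fin.
  - by rewrite lee_fin invr_ge0 /vol ler0n.
exact: hcvg.
Qed.
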